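(* Let $k\in\mathbb Z_{\ge1}$ and $\lambda_1,\lambda_2\in\mathbb C$. Then $\widetilde{\mathrm{Sol}}_{(k,k)}(-\lambda_1,-\lambda_2)\ne\{0\}$ if and only if $(\lambda_1,\lambda_2)=(\frac12(2-k-s),\frac12(2-k+s))$ for some $s\in\mathbb C$ (equivalently $\lambda_1+\lambda_2=2-k$), and in that case $\widetilde{\mathrm{Sol}}_{(k,k)}(-\frac12(2-k-s),-\frac12(2-k+s))=\mathbb C\,p_c^{(s;k)}(t)$.
   Context: Let $\vartheta_t=t\frac d{dt}$. For $a,b,\mu\in\mathbb C$ define $D^{(a,b)}(\mu;t)=\frac d{dt}+(\mu+a-\frac b2-1)(a-\vartheta_t)+\frac14t(a-1-\vartheta_t)(a-\vartheta_t)(b-\vartheta_t)$, and $D^{(a,b)}(\mu;-t)=-\frac d{dt}+(\mu+a-\frac b2-1)(a-\vartheta_t)-\frac14t(a-1-\vartheta_t)(a-\vartheta_t)(b-\vartheta_t)$ (substitution $t\mapsto -t$). For $k,\ell\in\mathbb Z_{\ge0}$, $\widetilde{\mathrm{Sol}}_{(k,\ell)}(-\lambda_1,-\lambda_2)=\{p\in\mathbb C[t]:\deg p\le\min(k,\ell),\ D^{(k,\ell)}(\lambda_1;t)p=0,\ D^{(\ell,k)}(\lambda_2;-t)p=0\}$. Cayley continuants: $\mathrm{Cay}_0(x;y)=1$, $\mathrm{Cay}_1(x;y)=x$, and for $m\ge2$, $\mathrm{Cay}_m(x;y)$ is the determinant of the $m\times m$ tridiagonal matrix with diagonal entries all $x$,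 superdiagonal entries $1,2,\dots,m-1$ and subdiagonal entries $y,y-1,\dots,y-m+2$; equivalently $\mathrm{Cay}_m(x;y)=\sum_{j=0}^m\binom mj(\frac{x+y}2)^{\underline j}(\frac{x-y}2)^{\overline{m-j}}$ with $r^{\underline j}=r(r-1)\cdots(r-j+1)$, $r^{\overline j}=r(r+1)\cdots(r+j-1)$. Polynomial: $p_c^{(s;k)}(t)=\sum_{m=0}^k\frac1{2^m}\binom km\mathrm{Cay}_m(s;k)t^m$. *)

(* Defs.v *)
From HB Require Import structures.
From mathcomp Require Import all_boot all_order all_algebra.
From mathcomp Require Import complex.
From mathcomp Require Import Rstruct.
Set Implicit Arguments. Unset Strict Implicit. Unset Printing Implicit Defensive.
Import Order.TTheory GRing.Theory Num.Theory.
Local Open Scope ring_scope.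

Notation CC := (complex Rdefinitions.R).

Definition theta (p : {poly CC}) : {poly CC} := 'X * p^`().

Definition cmt (c : CC) (p : {poly CC}) : {poly CC} := c *: p - theta p.

Definition Dplus (a b mu : CC) (p : {poly CC}) : {poly CC} :=
  p^`() + (mu + a - b / 2 - 1) *: cmt a p
  + (1 / 4 : CC) *: ('X * cmt (a - 1) (cmt a (cmt b p))).

(* D^{(a,b)}(mu; -t) p  (substitution t -> -t) *)
Definition Dminus (a b mu : CC) (p : {poly CC}) : {poly CC} :=
  - p^`() + (mu + a - b / 2 - 1) *: cmt a p
  - (1 / 4 : CC) *: ('X * cmt (a - 1) (cmt a (cmt b p))).

(* Solt k l lam1 lam2 p  <->  p \in \widetilde{Sol}_{(k,l)}(-lam1,-lam2) *)
Definition Solt (k l : nat) (lam1 lam2 : CC) (p : {poly CC}) : Prop :=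
  leq (size p) (minn k l).+1 /\
  Dplus k%:R l%:R lam1 p = 0 /\ Dminus l%:R k%:R lam2 p = 0.

(* Cayley continuant: determinant of the m x m tridiagonal matrix with
   diagonal x, superdiagonal 1,2,...,m-1, subdiagonal y, y-1, ..., y-m+2.
   (For m = 0 the empty determinant is 1, for m = 1 it is x.) *)
Definition Cay (m : nat) (x y : CC) : CC :=
  \det (\matrix_(i < m, j < m)
          (if i == j then x
           else if j == i.+1 :> nat then (i.+1)%:R
           else if i == j.+1 :> nat then y - j%:R
           else 0)).

Definition pc (s : CC) (k : nat) : {poly CC} :=
  \sum_(m < k.+1) ((1 / 2 ^+ m) * (binomial k m)%:R * Cay m s (k%:R)) *: 'X^m.

(* Main.v *)
Require Import Defs.
From mathcomp Require Import all_boot all_order all_algebra.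
From mathcomp Require Import complex Rstruct ring lra zify.
Import GRing.Theory Num.Theory.
Local Open Scope ring_scope.

Definition CayF (x y : CC) (i j : nat) : CC :=
  if (i == j)%N then x
           else if j == i.+1 then (i.+1)%:R
           else if i == j.+1 then y - j%:R
           else 0.

Lemma CayE m x y : Cay m x y = \det (\matrix_(i < m, j < m) CayF x y i j).
Proof. rewrite /Cay; congr (\det _); apply/matrixP => i j; rewrite !mxE.
Qed.

Lemma Cay0 x y : Cay 0 x y = 1.
Proof. by rewrite CayE det_mx00. Qed.

Lemma Cay1 x y : Cay 1 x y = x.
Proof. by rewrite CayE det_mx11 mxE. Qed.

Lemma lift_val n (h : 'I_n.+1) (i : 'I_n) :
  (lift h i : nat) = if (i < h)%N then (i : nat) else i.+1.
Proof. by rewrite /= /bump leqNgt; case: ltnP. Qed.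

Lemma CayF_d x y i : CayF x y i i = x.
Proof. by rewrite /CayF eqxx. Qed.
Lemma CayF_sup x y i : CayF x y i i.+1 = i.+1%:R.
Proof. rewrite /CayF ifF ?eqxx //; apply/negbTE/eqP; lia. Qed.
Lemma CayF_sub x y j : CayF x y j.+1 j = y - j%:R.
Proof. rewrite /CayF ifF; last by apply/negbTE/eqP; lia.
rewrite ifF; last by apply/negbTE/eqP; lia.
by rewrite eqxx. Qed.
Lemma CayF_0 x y i j : i <> j -> j <> i.+1 -> i <> j.+1 -> CayF x y i j = 0.
Proof. move=> *; rewrite /CayF !ifF //; apply/negbTE/eqP; lia. Qed.

Lemma Cay_rec m x y :
  Cay m.+2 x y = x * Cay m.+1 x y - (m.+1)%:R * (y - m%:R) * Cay m x y.
Proof.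
rewrite CayE (expand_det_row _ ord_max) big_ord_recr big_ord_recr /=.
rewrite big1 ?add0r; last first.
  move=> j _; rewrite !mxE /=.
  have hj := ltn_ord j.
  rewrite CayF_0 ?mul0r //; lia.
rewrite !mxE /= CayF_d CayF_sub.
rewrite /cofactor.
have -> : row' ord_max (col' ord_max (\matrix_(i < m.+2, j < m.+2) CayF x y i j))
   = \matrix_(i < m.+1, j < m.+1) CayF x y i j.
  apply/matrixP => i j; rewrite !mxE !lift_val /= (ltn_ord i) (ltn_ord j) //.
rewrite -CayE.
set N := row' _ _.
rewrite (expand_det_col _ ord_max) big_ord_recr /= big1 ?add0r; last first.
  move=> i _; rewrite /N !mxE !lift_val /=.
  have hi := ltn_ord i.
  rewrite ltnn ltnS (ltnW hi) CayF_0 ?mul0r //; lia.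
rewrite /cofactor.
have -> : row' ord_max (col' ord_max N)
   = \matrix_(i < m, j < m) CayF x y i j.
  apply/matrixP => i j; rewrite /N !mxE !lift_val /=.
  have hj := ltn_ord j; have hi := ltn_ord i.
  have hi2 : (i < m)%N by []. have hj2 : (j < m)%N by []. by rewrite !hi2 !hj2 ltnS (ltnW hi2).
rewrite -(CayE m).
rewrite /N /row' /col' !mxE !lift_val /= ltnn ltnSn CayF_sup.
have s1 : (-1) ^+ (m.+1 + m) = -1 :> CC.
  by rewrite -signr_odd oddD /= addNb addbb.
have s2 : forall n, (-1) ^+ (n + n) = 1 :> CC.
  by move=> n; rewrite -signr_odd oddD addbb.
rewrite s1 !s2 !mul1r; ring.
Qed.
Definition Tt (K : CC) (a : nat -> CC) (j : nat) : CC :=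
  if j is i.+1 then (K - 1 - i%:R) * ((K - i%:R) * ((K - i%:R) * a i)) else 0.
Definition Ep (K al : CC) (a : nat -> CC) (j : nat) : CC :=
  a j.+1 * j.+1%:R + al * ((K - j%:R) * a j) + 1/4 * Tt K a j.
Definition Em (K al : CC) (a : nat -> CC) (j : nat) : CC :=
  - (a j.+1 * j.+1%:R) + al * ((K - j%:R) * a j) - 1/4 * Tt K a j.

Lemma coef_theta p j : (theta p)`_j = j%:R * p`_j.
Proof.
rewrite /theta coefXM; case: j => [|j] /=; first by rewrite mulr0n mul0r.
by rewrite coef_deriv mulr_natl.
Qed.

Lemma coef_cmt c p j : (cmt c p)`_j = (c - j%:R) * p`_j.
Proof. by rewrite /cmt coefB coefZ coef_theta mulrBl. Qed.

Lemma coef_Dplus K mu p j :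
  (Dplus K K mu p)`_j = Ep K (mu + K - K / 2 - 1) (fun i => p`_i) j.
Proof.
rewrite /Dplus /Ep !coefD !coefZ coef_deriv coefXM -mulr_natr.
by case: j => [|j] /=; rewrite ?coef_cmt; ring.
Qed.

Lemma coef_Dminus K mu p j :
  (Dminus K K mu p)`_j = Em K (mu + K - K / 2 - 1) (fun i => p`_i) j.
Proof.
rewrite /Dminus /Em !coefB !coefD !coefN !coefZ coef_deriv coefXM -mulr_natr.
by case: j => [|j] /=; rewrite ?coef_cmt; ring.
Qed.

Lemma Solt_iff k l1 l2 p :
  Solt k k l1 l2 p <->
  (size p <= k.+1)%N /\
  (forall j, Ep k%:R (l1 + k%:R - k%:R / 2 - 1) (fun i => p`_i) j = 0 /\
             Em k%:R (l2 + k%:R - k%:R / 2 - 1) (fun i => p`_i) j = 0).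
Proof.
rewrite /Solt minnn; split.
  move=> [hs [h1 h2]]; split => // j.
  by rewrite -coef_Dplus -coef_Dminus h1 h2 coef0.
move=> [hs h]; split => //; split; apply/polyP => j.
  by rewrite coef_Dplus coef0; case: (h j).
by rewrite coef_Dminus coef0; case: (h j).
Qed.

Lemma pc_coef s k m : (pc s k)`_m =
  if (m < k.+1)%N then (1 / 2 ^+ m) * ('C(k, m))%:R * Cay m s k%:R else 0.
Proof.
by rewrite /pc -(poly_def _ (fun m => (1 / 2 ^+ m) * ('C(k, m))%:R * Cay m s k%:R)) coef_poly.
Qed.

Lemma two_neq0 : (2 : CC) != 0.
Proof. by rewrite pnatr_eq0. Qed.

Lemma natK_neq0 k i : (i < k)%N -> (k%:R - i%:R : CC) != 0.
Proof. by move=> h; rewrite subr_eq0 eqr_nat; apply/eqP; lia. Qed.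

Lemma pc_rec s k j : (1 <= k)%N ->
  let b := fun m => (pc s k)`_m in
  b j.+1 * j.+1%:R = s / 2 * ((k%:R - j%:R) * b j) - 1/4 * Tt k%:R b j.
Proof.
move=> hk b.
have bz : forall m, (k < m)%N -> b m = 0.
  by move=> m hm; rewrite /b pc_coef ifF //; apply/negbTE; lia.
have bv : forall m, (m <= k)%N -> b m = (1 / 2 ^+ m) * ('C(k, m))%:R * Cay m s k%:R.
  by move=> m hm; rewrite /b pc_coef ifT //; lia.
case: (ltngtP k j) => hkj.
- have h2 : b j.+1 = 0 by apply: bz; lia.
  rewrite h2 (bz _ hkj); clear h2.
  case: j hkj => [|i] hi /=; first lia.
  case: (ltngtP k i) => hki; first by rewrite bz // !mulr0 subrr; ring.
  + lia.
  + by rewrite hki subrr; ring.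
- case: j hkj => [|i] hi /=.
  + rewrite (bv 1%N) // (bv 0%N) //.
    rewrite Cay1 Cay0 bin0 bin1 expr0 expr1; by field.
  + have [r hr] : exists r, k = (i.+2 + r)%N by exists (k - i.+2)%N; lia.
    rewrite !bv; try lia.
    rewrite Cay_rec.
    have e1 : (i.+2)%:R * ('C(k, i.+2))%:R = (k%:R - (i.+1)%:R) * ('C(k, i.+1))%:R :> CC.
      rewrite -!natrM mul_bin_left natrM natrB //; lia.
    have e2 : (i.+1)%:R * ('C(k, i.+1))%:R = (k%:R - i%:R) * ('C(k, i))%:R :> CC.
      rewrite -!natrM mul_bin_left natrM natrB //; lia.
    have n0 : (k%:R - i%:R : CC) != 0 by apply: natK_neq0; lia.
    have n2 : ((i.+2)%:R : CC) != 0 by rewrite pnatr_eq0.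
    have e1' : ('C(k, i.+2))%:R = (k%:R - (i.+1)%:R) * ('C(k, i.+1))%:R / (i.+2)%:R :> CC.
      by rewrite -e1 mulrC mulKf.
    have e2' : ('C(k, i))%:R = (i.+1)%:R * ('C(k, i.+1))%:R / (k%:R - i%:R) :> CC.
      by rewrite e2 mulrC mulKf.
    rewrite e1' e2' !exprS.
    have n3 : (2 ^+ i : CC) != 0 by rewrite expf_neq0 // two_neq0.
    field.
    by rewrite n0 n3 -natrD pnatr_eq0.
- subst j; rewrite bz // mul0r subrr mul0r mulr0 sub0r.
  have [i hi] : exists i, k = i.+1 by exists k.-1; lia.
  have -> : Tt k%:R b k = 0.
    rewrite hi /=.
    rewrite (_ : (i.+1)%:R - 1 - i%:R = 0 :> CC); last ring.
    by rewrite mul0r.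
  by rewrite mulr0 oppr0.
Qed.

Lemma Ep_ext K al a a' j : (forall m, a m = a' m) -> Ep K al a j = Ep K al a' j.
Proof. by move=> H; rewrite /Ep /Tt; case: j => [|j]; rewrite !H. Qed.
Lemma Em_ext K al a a' j : (forall m, a m = a' m) -> Em K al a j = Em K al a' j.
Proof. by move=> H; rewrite /Em /Tt; case: j => [|j]; rewrite !H. Qed.
Lemma Ep_lin K al a b c j :
  Ep K al (fun m => a m - c * b m) j = Ep K al a j - c * Ep K al b j.
Proof. by rewrite /Ep /Tt; case: j => [|j]; ring. Qed.
Lemma Em_lin K al a b c j :
  Em K al (fun m => a m - c * b m) j = Em K al a j - c * Em K al b j.
Proof. by rewrite /Em /Tt; case: j => [|j]; ring. Qed.
Lemma Ep_scale K al b c j :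
  Ep K al (fun m => c * b m) j = c * Ep K al b j.
Proof. by rewrite /Ep /Tt; case: j => [|j]; ring. Qed.
Lemma Em_scale K al b c j :
  Em K al (fun m => c * b m) j = c * Em K al b j.
Proof. by rewrite /Em /Tt; case: j => [|j]; ring. Qed.

Lemma pc_sol s k : (1 <= k)%N ->
  Solt k k ((2 - k%:R - s) / 2) ((2 - k%:R + s) / 2) (pc s k).
Proof.
move=> hk; apply/Solt_iff; split.
  by rewrite /pc -(poly_def _ (fun m => (1 / 2 ^+ m) * ('C(k, m))%:R * Cay m s k%:R)) size_poly.
move=> j; have := @pc_rec s k j hk => /= h.
rewrite /Ep /Em h; split; by field.
Qed.

Lemma uniq0 K al a : a 0%N = 0 -> (forall j, Ep K al a j = 0) -> forall n, a n = 0.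
Proof.
move=> h0 hE.
suff: forall n, a n = 0 /\ a n.+1 = 0 by move=> H n; case: (H n).
elim=> [|n [IH1 IH2]].
  split => //; move: (hE 0%N); rewrite /Ep /Tt h0 /=.
  by rewrite !mulr0 !addr0 mulr1.
split => //; move: (hE n.+1); rewrite /Ep /Tt IH1 IH2 !mulr0 !addr0.
by move/eqP; rewrite mulf_eq0 pnatr_eq0 orbF => /eqP.
Qed.

Lemma Tt_0 K a j : (forall i, (i < j)%N -> a i = 0) -> Tt K a j = 0.
Proof. by case: j => [|j] //= H; rewrite H // !mulr0. Qed.

Theorem proposition6p4 (k : nat) (lam1 lam2 : CC) :
  (1 <= k)%N ->
  ((exists p : {poly CC}, Solt k k lam1 lam2 p /\ p != 0) <->
     (exists s : CC, lam1 = (2 - k%:R - s) / 2 /\ lam2 = (2 - k%:R + s) / 2))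
  /\
  (forall s : CC, forall p : {poly CC},
     Solt k k ((2 - k%:R - s) / 2) ((2 - k%:R + s) / 2) p <->
     exists c : CC, p = c *: pc s k).
Proof.
move=> hk.
have pc0 : forall s, (pc s k)`_0 = 1.
  by move=> s; rewrite pc_coef /= expr0 bin0 Cay0 divr1 !mul1r.
split; last first.
  move=> s p; split.
    move=> hp; exists p`_0.
    have hq : forall n, (p - p`_0 *: pc s k)`_n = 0.
      apply: (@uniq0 k%:R ((2 - k%:R - s) / 2 + k%:R - k%:R / 2 - 1)).
        by rewrite coefB coefZ pc0 mulr1 subrr.
      move=> j; rewrite (@Ep_ext _ _ _ (fun m => p`_m - p`_0 * (pc s k)`_m)); last first.
        by move=> m; rewrite coefB coefZ.
      rewrite Ep_lin.
      case: (proj1 (Solt_iff _ _ _ _) hp) => _ /(_ j) [-> _].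
      case: (proj1 (Solt_iff _ _ _ _) (pc_sol s k hk)) => _ /(_ j) [-> _].
      by rewrite mulr0 subrr.
    apply/polyP => n; move: (hq n); rewrite coefB => /eqP; rewrite subr_eq0 => /eqP.
    done.
  move=> [c ->]; apply/Solt_iff.
  case: (proj1 (Solt_iff _ _ _ _) (pc_sol s k hk)) => hs hE.
  split; first exact: leq_trans (size_scale_leq _ _) hs.
  move=> j; rewrite (@Ep_ext _ _ _ (fun m => c * (pc s k)`_m)); last first.
    by move=> m; rewrite coefZ.
  rewrite (@Em_ext _ _ _ (fun m => c * (pc s k)`_m)); last first.
    by move=> m; rewrite coefZ.
  by rewrite Ep_scale Em_scale; case: (hE j) => -> ->; rewrite mulr0.
split.
  move=> [p [/Solt_iff [hs hE] hp0]].
  set a1 := lam1 + k%:R - k%:R / 2 - 1.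
  set a2 := lam2 + k%:R - k%:R / 2 - 1.
  have [h0|h0] := eqVneq (a1 + a2) 0.
    have h1 : lam1 + lam2 + k%:R - 2 = 0.
      by rewrite -h0 /a1 /a2; field.
    have e : lam2 = 2 - k%:R - lam1 + (lam1 + lam2 + k%:R - 2) by ring.
    rewrite h1 addr0 in e.
    by exists (lam2 - lam1); rewrite e; split; field.
  exfalso; move/eqP: hp0; apply.
  have hlt : forall j, (j < k)%N -> p`_j = 0.
    move=> j hj; case: (hE j) => hp hm.
    have E : Ep k%:R a1 (fun i => p`_i) j + Em k%:R a2 (fun i => p`_i) j
       = (a1 + a2) * ((k%:R - j%:R) * p`_j) by rewrite /Ep /Em; ring.
    rewrite hp hm addr0 in E; move: (esym E).
    move/eqP; rewrite !mulf_eq0 (negbTE h0) (negbTE (@natK_neq0 k j hj)) /=.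
    by move/eqP.
  have hkk : p`_k = 0.
    have [k' hk'] : exists k', k = k'.+1 by exists k.-1; lia.
    case: (hE k') => hp _.
    move: hp; rewrite /Ep Tt_0; last by move=> i hi; apply: hlt; lia.
    rewrite (hlt k'); last lia.
    rewrite -hk' !mulr0 !addr0 => /eqP; rewrite mulf_eq0 pnatr_eq0 (gtn_eqF hk) orbF.
    by move/eqP.
  apply/polyP => j; rewrite coef0.
  case: (ltngtP j k) => hj; first exact: hlt.
    by apply: nth_default; apply: leq_trans hs _.
  by rewrite hj.
move=> [s [-> ->]]; exists (pc s k); split; first exact: pc_sol.
apply/eqP => h; move: (pc0 s); rewrite h coef0 => /eqP.
by rewrite eq_sym oner_eq0.
Qed.
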